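(* Let $p$ be any prime and $k$ a field of characteristic $p$. Then $L_1\neq L_2$.
   Context: Let $X=\{x_1,x_2,\ldots\}$ be a countably infinite set and let $k_0\langle X\rangle$ denote the free associative $k$-algebra (without identity) on $X$. A $T$-space of $k_0\langle X\rangle$ is a $k$-linear subspace closed under every algebra endomorphism of $k_0\langle X\rangle$; the $T$-space generated by a subset is the smallest $T$-space containing it. Let $L_1$ be the $T$-space generated by $x_1^p$, and let $L_2$ be the $T$-space generated by $L_1$ together with all products $u\,v^p$ with $u\in L_1$, $v\in k_0\langle X\rangle$ (equivalently, the $T$-space generated by $x_1^p$ and $x_1^px_2^p$). *)

(* Defs.v *)
From mathcomp Require Import all_boot all_algebra.
Set Implicit Arguments. Unset Strict Implicit. Unset Printing Implicit Defensive.
Import GRing.Theory.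
Local Open Scope ring_scope.

(* The free associative k-algebra without identity k_0<X> on X = {x_0, x_1, ...}
   (variables indexed by nat; the paper's x_1, x_2 are our x_0, x_1).
   An element is represented by its coefficient function on words
   (words = seq nat), with finite support and zero coefficient on the empty word. *)
Section FreeAlg.
Variable k : fieldType.

Definition poly_t := seq nat -> k.

Definition inFA (f : poly_t) : Prop :=
  f [::] = 0 /\ exists s : seq (seq nat), forall w, f w != 0 -> w \in s.

Definition fa_zero : poly_t := fun _ => 0.
Definition fa_add (f g : poly_t) : poly_t := fun w => f w + g w.
Definition fa_scale (a : k) (f : poly_t) : poly_t := fun w => a * f w.
Definition fa_mul (f g : poly_t) : poly_t := fun w =>
  \sum_(i < (size w).+1) f (take i w) * g (drop i w).
Definition fa_var (i : nat) : poly_t := fun w => (w == [:: i])%:R.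
Definition fa_pow (f : poly_t) (n : nat) : poly_t := iter n.-1 (fa_mul f) f.

Definition fa_endo (phi : poly_t -> poly_t) : Prop :=
  (forall f, inFA f -> inFA (phi f)) /\
  (forall a f g, inFA f -> inFA g ->
     phi (fa_add (fa_scale a f) g) = fa_add (fa_scale a (phi f)) (phi g)) /\
  (forall f g, inFA f -> inFA g -> phi (fa_mul f g) = fa_mul (phi f) (phi g)).

Definition T_space (S : poly_t -> Prop) : Prop :=
  (forall f, S f -> inFA f) /\
  S fa_zero /\
  (forall a f g, S f -> S g -> S (fa_add (fa_scale a f) g)) /\
  (forall phi, fa_endo phi -> forall f, S f -> S (phi f)).

Definition T_gen (G : poly_t -> Prop) (f : poly_t) : Prop :=
  inFA f /\ forall S, T_space S -> (forall g, G g -> S g) -> S f.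

Definition L1 (p : nat) : poly_t -> Prop :=
  T_gen (fun g => g = fa_pow (fa_var 0) p).

Definition L2 (p : nat) : poly_t -> Prop :=
  T_gen (fun g => L1 p g \/
           exists u v, L1 p u /\ inFA v /\ g = fa_mul u (fa_pow v p)).

End FreeAlg.

(* Main.v *)
From HB Require Import structures.
Require Import Defs.
From mathcomp Require Import all_boot all_algebra.
From mathcomp Require Import boolp.
From mathcomp Require Import zify.
Set Implicit Arguments. Unset Strict Implicit. Unset Printing Implicit Defensive.
Import GRing.Theory.
Local Open Scope ring_scope.

Section Count.
Variables (R : pzRingType) (k : fieldType) (n : nat) (tau : R -> k).
Hypothesis hchar : n.+1 \in [pchar k].
Hypothesis tD : forall x y, tau (x + y) = tau x + tau y.
Hypothesis tC : forall x y, tau (x * y) = tau (y * x).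
Variables x y : R.

Let F (b : bool) := if b then y else x.
Let W (f : {ffun 'I_n.+1 -> bool}) := \prod_(i < n.+1) F (f i).
Let c (f : {ffun 'I_n.+1 -> bool}) := (\sum_(i < n.+1) (f i : nat))%N.
Let rt (f : {ffun 'I_n.+1 -> bool}) : {ffun 'I_n.+1 -> bool} := [ffun i => f (ordS i)].

Lemma t0 : tau 0 = 0.
Proof. by apply: (addrI (tau 0)); rewrite -tD !addr0. Qed.

Lemma tsum I r (P : pred I) G : tau (\sum_(i <- r | P i) G i) = \sum_(i <- r | P i) tau (G i).
Proof. exact: (big_morph tau tD t0). Qed.

Lemma expand : (x + y) ^+ n.+1 = \sum_f W f.
Proof.
rewrite -{1}[n.+1]card_ord -prodr_const.
rewrite (eq_bigr (fun i => \sum_(b : bool) F b)); last first.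
  by move=> i _; rewrite big_bool /= addrC.
by rewrite bigA_distr_bigA.
Qed.

Lemma c_rt f : c (rt f) = c f.
Proof.
rewrite /c [RHS](reindex_inj (@ordS_inj n.+1)) /=.
by apply: eq_bigr => i _; rewrite ffunE.
Qed.

Lemma W_rt f : tau (W (rt f)) = tau (W f).
Proof.
rewrite /W big_ord_recr big_ord_recl /= tC; congr (tau (_ * _)).
  by rewrite /rt ffunE; congr (F (f _)); apply: val_inj; rewrite /= modnn.
apply: eq_bigr => i _; rewrite /rt ffunE; congr (F (f _)); apply: val_inj => /=.
by rewrite modn_small // ltnS.
Qed.

Lemma rt_inj : injective rt.
Proof.
move=> f g /ffunP E; apply/ffunP => i.
have := E (ord_pred i); rewrite !ffunE.
by rewrite (ord_predK i).
Qed.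

Let G f := ((0 < c f < n.+1)%N%:R * (c f)%:R^-1 * tau (W f)) : k.

Lemma G_rt f : G (rt f) = G f.
Proof. by rewrite /G c_rt W_rt. Qed.

Let A (i : 'I_n.+1) := \sum_(f : {ffun 'I_n.+1 -> bool}) (f i)%:R * G f.

Lemma A_S i : A (ordS i) = A i.
Proof.
rewrite /A [RHS](reindex_inj rt_inj) /=.
by apply: eq_bigr => f _; rewrite G_rt ffunE.
Qed.

Lemma A_const i : A i = A ord0.
Proof.
case: i => m; elim: m => [|m IH] lt; first by congr A; apply: val_inj.
have lt' : (m < n.+1)%N by apply: ltnW.
rewrite -(IH lt') -[RHS]A_S; congr A; apply: val_inj => /=.
by rewrite modn_small.
Qed.

Lemma mid : \sum_f (0 < c f < n.+1)%N%:R * tau (W f) = 0.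
Proof.
have -> : \sum_f (0 < c f < n.+1)%N%:R * tau (W f) = \sum_(i < n.+1) A i.
  rewrite /A exchange_big /=; apply: eq_bigr => f _.
  rewrite -big_distrl /= -natr_sum -/(c f) /G.
  case: (boolP (0 < c f < n.+1)%N) => h /=; last by rewrite !mul0r mulr0.
  rewrite !mul1r mulrA mulfV ?mul1r //.
  rewrite -(dvdn_pcharf hchar); case/andP: h => h1 h2.
  by rewrite gtnNdvd.
rewrite (eq_bigr (fun _ => A ord0)); last by move=> i _; apply: A_const.
rewrite sumr_const card_ord -mulr_natl.
by rewrite (pcharf0 hchar) mul0r.
Qed.

Lemma c0 f : (c f == 0)%N = (f == [ffun => false]).
Proof.
rewrite /c sum_nat_eq0; apply/forallP/eqP => [H|->].
  by apply/ffunP => i; rewrite ffunE; move/eqP: (H i); case: (f i).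
by move=> i; rewrite ffunE.
Qed.

Lemma cN f : (c f + \sum_(i < n.+1) (~~ f i : nat))%N = n.+1.
Proof.
rewrite /c -big_split /= (eq_bigr (fun _ => 1%N)); last by move=> i _; case: (f i).
by rewrite sum_nat_const card_ord muln1.
Qed.

Lemma cp f : (c f == n.+1) = (f == [ffun => true]).
Proof.
have := cN f; set d := (\sum_(i < n.+1) (~~ f i : nat))%N => E.
have -> : (c f == n.+1) = (d == 0)%N.
  by rewrite -{1}E -{1}[c f]addn0 eqn_add2l eq_sym.
rewrite /d sum_nat_eq0; apply/forallP/eqP => [H|->].
  by apply/ffunP => i; rewrite ffunE; move/eqP: (H i); case: (f i).
by move=> i; rewrite ffunE.
Qed.

Lemma cle f : (c f <= n.+1)%N.
Proof. by rewrite -(cN f) leq_addr. Qed.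

Lemma sum1 (b : bool) :
  \sum_(f : {ffun 'I_n.+1 -> bool}) (f == [ffun => b])%:R * tau (W f) = tau ((F b) ^+ n.+1).
Proof.
rewrite (bigD1 [ffun => b]) //= eqxx mul1r big1 ?addr0; last first.
  by move=> g /negbTE ->; rewrite mul0r.
rewrite /W (eq_bigr (fun _ => F b)); last by move=> i _; rewrite ffunE.
by rewrite prodr_const card_ord.
Qed.

Lemma main_tr : tau ((x + y) ^+ n.+1) = tau (x ^+ n.+1) + tau (y ^+ n.+1).
Proof.
rewrite expand tsum.
have spl f : tau (W f) = (c f == 0)%N%:R * tau (W f) + (c f == n.+1)%:R * tau (W f)
     + (0 < c f < n.+1)%N%:R * tau (W f).
  have := cle f; case E: (c f) => [|m] /= h; first by rewrite mul1r !mul0r !addr0.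
  rewrite mul0r add0r eqSS ltnS; have [->|ne] := eqVneq m n.
    by rewrite ltnn mul1r mul0r addr0.
  by rewrite ltn_neqAle ne -ltnS h mul0r add0r mul1r.
rewrite (eq_bigr _ (fun f _ => spl f)) !big_split /= mid addr0.
rewrite (eq_bigr (fun f => (f == [ffun => false])%:R * tau (W f))); last by move=> f _; rewrite c0.
rewrite [X in _ + X](eq_bigr (fun f => (f == [ffun => true])%:R * tau (W f))); last by move=> f _; rewrite cp.
by rewrite !sum1.
Qed.

End Count.

Lemma shiftsum (k : nmodType) (a N : nat) (F : nat -> k) : (a <= N)%N ->
  \sum_(j < N - a) F (j + a)%N = \sum_(b < N) (if (a <= b)%N then F b else 0).
Proof.
move=> h; rewrite -big_mkcond /=.
rewrite -(@big_mkord _ _ _ (N - a)%N (fun _ => true) (fun i => F (i + a)%N)).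
rewrite -(big_addn 0%N N a (fun _ => true) F) add0n big_geq_mkord.
by apply: eq_bigl.
Qed.
Lemma widensum (k : nmodType) (b N : nat) (F : nat -> k) : (b < N)%N ->
  \sum_(a < b.+1) F a = \sum_(a < N) (if (a <= b)%N then F a else 0).
Proof.
move=> h; rewrite -big_mkcond /= (big_ord_widen N F h).
by apply: eq_bigl.
Qed.

Section PS.
Variable k : fieldType.
Definition PS := poly_t k.
HB.instance Definition _ := gen_eqMixin PS.
HB.instance Definition _ := gen_choiceMixin PS.

Definition ps_opp (f : PS) : PS := fun w => - f w.
Lemma ps_addA : associative (@fa_add k).
Proof. by move=> f g h; apply: funext => w; rewrite /fa_add addrA. Qed.
Lemma ps_addC : commutative (@fa_add k).
Proof. by move=> f g; apply: funext => w; rewrite /fa_add addrC. Qed.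
Lemma ps_add0 : left_id (@fa_zero k) (@fa_add k).
Proof. by move=> f; apply: funext => w; rewrite /fa_add /fa_zero add0r. Qed.
Lemma ps_addN : left_inverse (@fa_zero k) ps_opp (@fa_add k).
Proof. by move=> f; apply: funext => w; rewrite /fa_add /fa_zero /ps_opp addNr. Qed.
HB.instance Definition _ := GRing.isZmodule.Build PS ps_addA ps_addC ps_add0 ps_addN.

Definition ps_one : PS := fun w => (w == [::])%:R.

Lemma take_nil (i : nat) (w : seq nat) : (i <= size w)%N -> (take i w == [::]) = (i == 0)%N.
Proof. by move=> h; rewrite -size_eq0 size_take_min (minn_idPl h). Qed.
Lemma drop_nil (i : nat) (w : seq nat) : (i <= size w)%N -> (drop i w == [::]) = (i == size w).
Proof. by move=> h; rewrite -size_eq0 size_drop subn_eq0 eqn_leq h. Qed.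

Lemma ps_mul1 : left_id ps_one (@fa_mul k).
Proof.
move=> f; apply: funext => w; rewrite /fa_mul /ps_one big_ord_recl /= take0 drop0 eqxx mul1r.
rewrite big1 ?addr0 // => i _; rewrite take_nil ?mul0r // ltn_ord.
Qed.

Lemma ps_mul1r : right_id ps_one (@fa_mul k).
Proof.
move=> f; apply: funext => w; rewrite /fa_mul /ps_one big_ord_recr /= drop_size take_size eqxx mulr1.
rewrite big1 ?add0r // => i _; rewrite drop_nil /=; first by rewrite (ltn_eqF (ltn_ord i)) mulr0.
by apply: ltnW.
Qed.

Lemma ps_mulDl : left_distributive (@fa_mul k) (@fa_add k).
Proof.
move=> f g h; apply: funext => w; rewrite /fa_mul /fa_add -big_split /=.
by apply: eq_bigr => i _; rewrite mulrDl.
Qed.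

Lemma ps_mulDr : right_distributive (@fa_mul k) (@fa_add k).
Proof.
move=> f g h; apply: funext => w; rewrite /fa_mul /fa_add -big_split /=.
by apply: eq_bigr => i _; rewrite mulrDr.
Qed.

Lemma ps_mulA : associative (@fa_mul k).
Proof.
move=> f g h; apply: funext => w; rewrite /fa_mul.
set N := (size w).+1.
pose T (a b : nat) := f (take a w) * g (take (b - a) (drop a w)) * h (drop b w).
transitivity (\sum_(a < N) \sum_(b < N) (if (a <= b)%N then T a b else 0)).
  apply: eq_bigr => a _; rewrite size_drop big_distrr /=.
  have ha : (a <= size w)%N by rewrite -ltnS.
  rewrite -subSn // -(@shiftsum _ a N (T a)); last exact: ltnW.
  apply: eq_bigr => j _.
  by rewrite /T addnK drop_drop mulrA.
rewrite exchange_big /=; apply: eq_bigr => b _.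
have hb : (b <= size w)%N by rewrite -ltnS.
rewrite big_distrl /= size_takel // (@widensum _ b N (fun a => f (take a (take b w)) * g (drop a (take b w)) * h (drop b w))); last exact: ltn_ord.
apply: eq_bigr => a _; case: (leqP a b) => // hab.
by rewrite /T take_takel // take_drop subnK.
Qed.

HB.instance Definition _ := GRing.Zmodule_isPzRing.Build PS ps_mulA ps_mul1 ps_mul1r ps_mulDl ps_mulDr.

Lemma mulE (f g : PS) : f * g = fa_mul f g. Proof. by []. Qed.
Lemma addE (f g : PS) : f + g = fa_add f g. Proof. by []. Qed.
Lemma oneE : (1 : PS) = ps_one. Proof. by []. Qed.
Lemma zeroE : (0 : PS) = fa_zero k. Proof. by []. Qed.
Lemma addEw (f g : PS) w : (f + g) w = f w + g w. Proof. by []. Qed.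
Lemma zeroEw w : (0 : PS) w = 0. Proof. by []. Qed.

Lemma sumEw I (r : seq I) (P : pred I) (F : I -> PS) w :
  (\sum_(i <- r | P i) F i) w = \sum_(i <- r | P i) F i w.
Proof. exact: (big_morph (fun f : PS => f w) (fun f g => addEw f g w) (zeroEw w)). Qed.

Definition mono (u : seq nat) : PS := fun w => (w == u)%:R.
Definition cst (a : k) : PS := fun w => (w == [::])%:R * a.

Lemma cst_mul a (f : PS) : cst a * f = fa_scale a f.
Proof.
apply: funext => w; rewrite mulE /fa_mul /cst big_ord_recl /= take0 drop0 eqxx mul1r.
rewrite big1 ?addr0 // => i _; rewrite take_nil ?mul0r // ltn_ord.
Qed.

Lemma mul_cst a (f : PS) : f * cst a = fa_scale a f.
Proof.
apply: funext => w; rewrite mulE /fa_mul /cst big_ord_recr /= drop_size take_size eqxx mul1r /fa_scale mulrC.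
rewrite big1 ?add0r // => i _; rewrite drop_nil /=; first by rewrite (ltn_eqF (ltn_ord i)) mul0r mulr0.
by apply: ltnW.
Qed.

Lemma cst_comm a (f : PS) : GRing.comm (cst a) f.
Proof. by rewrite /GRing.comm cst_mul mul_cst. Qed.

Lemma cst_exp a n : cst a ^+ n = cst (a ^+ n).
Proof.
elim: n => [|n IH].
  by apply: funext => w; rewrite expr0 oneE /ps_one /cst mulr1.
by rewrite exprS IH cst_mul; apply: funext => w; rewrite /fa_scale /cst exprS mulrCA mulrA.
Qed.

Lemma mono_mul u v : mono u * mono v = mono (u ++ v).
Proof.
apply: funext => w; rewrite mulE /fa_mul /mono.
have key (i : nat) : (i < (size w).+1)%N -> ((take i w == u) && (drop i w == v)) = ((i == size u) && (w == u ++ v)).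
  move=> hi.
  apply/andP/andP => [[/eqP e1 /eqP e2]|[/eqP e1 /eqP e2]].
    split; last by rewrite -e1 -e2 cat_take_drop.
    by rewrite -e1 size_takel // -ltnS.
  by rewrite e2 e1 take_size_cat // drop_size_cat.
under eq_bigr => i _ do rewrite -natrM mulnb (key _ (ltn_ord i)).
case: (eqVneq w (u ++ v)) => [e|ne]; last first.
  by rewrite big1 // => i _; rewrite andbF.
have hu : (size u < (size w).+1)%N by rewrite ltnS e size_cat leq_addr.
under eq_bigr => i _ do rewrite andbT.
rewrite (bigD1 (Ordinal hu)) //= eqxx big1 ?addr0 // => i ne'.
case: eqP => // hi; case/eqP: ne'; exact: val_inj.
Qed.

Lemma flat_nseqC (u : seq nat) n : flatten (nseq n u) ++ u = u ++ flatten (nseq n u).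
Proof. by elim: n => //= [|n IH]; rewrite ?cats0 // -catA IH. Qed.

Lemma mono_exp u n : mono u ^+ n = mono (flatten (nseq n u)).
Proof.
elim: n => [|n IH]; first by rewrite expr0.
by rewrite exprS IH mono_mul.
Qed.

Definition cyc (F : seq nat -> k) (w : seq nat) := \sum_(j < size w) F (rot j w).

Lemma cyc_rot1 F w : cyc F (rot 1 w) = cyc F w.
Proof.
rewrite /cyc size_rot; case E: (size w) => [|m]; first by rewrite !big_ord0.
rewrite big_ord_recr [RHS]big_ord_recl /= addrC; congr (_ + _).
  rewrite -rotD; last by rewrite addn1 E.
  by rewrite addn1 -E rot_size rot0.
apply: eq_bigr => j _; rewrite /bump /= add1n -rotD ?addn1 // E ltnS.
by apply: ltnW.
Qed.

Lemma cyc_rot F w i : cyc F (rot i w) = cyc F w.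
Proof.
elim: i => [|i IH]; first by rewrite rot0.
case: (ltnP i (size w)) => h.
  by rewrite -add1n rotD ?add1n // cyc_rot1 IH.
by rewrite !rot_oversize // leqW.
Qed.

Lemma cyc_rotin F w i : \sum_(j < size w) F (rot i (rot j w)) = cyc F w.
Proof.
rewrite -(cyc_rot F w i) /cyc size_rot; apply: eq_bigr => j _; by rewrite rot_rot.
Qed.

Definition lam (w0 : seq nat) (f : PS) := \sum_(j < size w0) f (rot j w0).

Lemma lam_tr w0 (f g : PS) : lam w0 (f * g) = lam w0 (g * f).
Proof.
rewrite /lam; set n := size w0.
transitivity (\sum_(i < n.+1) \sum_(j < n) f (take i (rot j w0)) * g (drop i (rot j w0))).
  rewrite exchange_big; apply: eq_bigr => j _; rewrite mulE /fa_mul size_rot //.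
transitivity (\sum_(i < n.+1) \sum_(j < n) g (take i (rot j w0)) * f (drop i (rot j w0))); last first.
  rewrite exchange_big; apply: eq_bigr => j _; rewrite mulE /fa_mul size_rot //.
rewrite [RHS](reindex_inj rev_ord_inj) /=; apply: eq_bigr => i _.
have hi : (i <= n)%N by rewrite -ltnS.
rewrite subSS.
transitivity (cyc (fun r => g (take (n - i) r) * f (drop (n - i) r)) w0); last by [].
rewrite -(cyc_rotin _ w0 i); apply: eq_bigr => j _.
have hr : size (drop i (rot j w0)) = (n - i)%N by rewrite size_drop size_rot.
by rewrite /(rot i) take_size_cat // drop_size_cat // mulrC.
Qed.

End PS.

Section Main.
Variables (k : fieldType) (p : nat).
Hypothesis hp : prime p.
Hypothesis hchar : p \in [pchar k].

Let w0 := nseq p 0%N ++ nseq p 1%N.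
Let L := lam (k:=k) w0.

Lemma p_gt1 : (1 < p)%N. Proof. exact: prime_gt1. Qed.

Lemma size_w0 : size w0 = (p + p)%N. Proof. by rewrite size_cat !size_nseq. Qed.

Lemma nthw0 i : (i < p + p)%N -> nth 0%N w0 i = if (i < p)%N then 0%N else 1%N.
Proof.
move=> h; rewrite nth_cat size_nseq; case: ifP => hi; rewrite nth_nseq ?hi //.
by have -> : (i - p < p)%N by lia.
Qed.

Lemma size_flat (u : seq nat) n : size (flatten (nseq n u)) = (n * size u)%N.
Proof. by elim: n => //= n IH; rewrite size_cat IH mulSn. Qed.

Lemma rot_neq_pow j u : rot j w0 <> flatten (nseq p u).
Proof.
move=> E.
have hs : size u = 2%N.
  have := congr1 size E; rewrite size_rot size_w0 size_flat => h.
  have hp0 : (0 < p)%N by apply: prime_gt0.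
  by apply/eqP; rewrite -(eqn_pmul2l hp0) -h; apply/eqP; lia.
have r2 : rot 2 (flatten (nseq p u)) = flatten (nseq p u).
  case: p hp => [//|m] _ /=; rewrite -hs rot_size_cat; exact: flat_nseqC.
have : rot 2 w0 = w0.
  apply: (@rot_inj j); rewrite rot_rot E; exact: r2.
move/(congr1 (fun s => nth 0%N s (p - 2)%N)).
have h1 := p_gt1.
rewrite /rot nth_cat size_drop size_w0.
have -> : (p - 2 < p + p - 2)%N by lia.
rewrite nth_drop !nthw0; try lia.
have -> : (2 + (p - 2) < p)%N = false by lia.
by have -> : (p - 2 < p)%N by lia.
Qed.

Lemma L_add (f g : PS k) : L (f + g) = L f + L g.
Proof. by rewrite /L /lam -big_split. Qed.

Lemma L_cst a (f : PS k) : L (cst a * f) = a * L f.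
Proof. by rewrite /L /lam cst_mul mulr_sumr. Qed.

Lemma L_mono v : L (mono k v) = \sum_(j < size w0) (rot j w0 == v)%:R.
Proof. by []. Qed.

Lemma L_mono_pow u : L (mono k u ^+ p) = 0.
Proof.
rewrite mono_exp L_mono big1 // => j _.
by case: eqP => // /rot_neq_pow.
Qed.

Lemma L_0 : L 0 = 0.
Proof. by rewrite /L /lam big1. Qed.

Lemma L_sum_pow I (r : seq I) (X : I -> PS k) :
  L ((\sum_(i <- r) X i) ^+ p) = \sum_(i <- r) L (X i ^+ p).
Proof.
elim: r => [|i r IH].
  rewrite !big_nil expr0n; have -> : (p == 0%N) = false by case: p hp.
  exact: L_0.
rewrite !big_cons -IH.
case: p hp hchar => [//|n] _ hc.
by rewrite (main_tr hc L_add (lam_tr w0)).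
Qed.

Lemma L_pow (g : PS k) : inFA g -> L (g ^+ p) = 0.
Proof.
case=> _ [s hs].
have -> : g = \sum_(u <- undup s) cst (g u) * mono k u.
  apply: funext => w; rewrite sumEw.
  under eq_bigr => u _ do rewrite cst_mul /fa_scale /mono.
  case: (boolP (w \in undup s)) => hw.
    rewrite (bigD1_seq w) ?undup_uniq //= eqxx mulr1 big1 ?addr0 // => u hu.
    by rewrite eq_sym (negbTE hu) mulr0.
  rewrite big1_seq; last first.
    move=> u /andP [_ hu]; case: eqP => [e|_]; last by rewrite mulr0.
    by rewrite e hu in hw.
  by apply/eqP; apply: contraR hw => /hs; rewrite mem_undup.
rewrite L_sum_pow big1 // => u _.
by rewrite exprMn_comm ?cst_exp ?L_cst ?L_mono_pow ?mulr0 //; apply: cst_comm.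
Qed.

End Main.

Section Final.
Variable k : fieldType.

Lemma inFA_zero : inFA (fa_zero k).
Proof. by split => //; exists [::] => w; rewrite eqxx. Qed.

Lemma inFA_lin a (f g : poly_t k) : inFA f -> inFA g -> inFA (fa_add (fa_scale a f) g).
Proof.
move=> [f0 [s hs]] [g0 [t ht]]; split; first by rewrite /fa_add /fa_scale f0 g0 mulr0 addr0.
exists (s ++ t) => w nz; rewrite mem_cat.
case: (eqVneq (f w) 0) => [e|/hs -> //].
case: (eqVneq (g w) 0) => [e'|/ht ->]; last by rewrite orbT.
by move: nz; rewrite /fa_add /fa_scale e e' mulr0 addr0 eqxx.
Qed.

Lemma inFA_mul (f g : poly_t k) : inFA f -> inFA g -> inFA (fa_mul f g).
Proof.
move=> [f0 [s hs]] [g0 [t ht]]; split; first by rewrite /fa_mul big_ord1 /= f0 mul0r.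
exists [seq x ++ y | x <- s, y <- t] => w; apply: contraR => nin.
rewrite /fa_mul big1 // => i _.
case: (eqVneq (f (take i w)) 0) => [->|/hs hf]; first by rewrite mul0r.
case: (eqVneq (g (drop i w)) 0) => [->|/ht hg]; first by rewrite mulr0.
by case/negP: nin; rewrite -(cat_take_drop i w); apply: allpairs_f.
Qed.

Lemma inFA_var i : inFA (fa_var k i).
Proof.
split; first by [].
by exists [:: [:: i]] => w; rewrite /fa_var mem_seq1; case: (w == [:: i]); rewrite /= ?eqxx.
Qed.

Lemma iter_inFA (f : poly_t k) n : inFA f -> inFA (iter n (fa_mul f) f).
Proof. by move=> hf; elim: n => //= n IH; apply: inFA_mul. Qed.

Lemma iter_exp (f : poly_t k) n : iter n (fa_mul f) f = ((f : PS k) ^+ n.+1).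
Proof.
elim: n => [|n IH]; first by rewrite expr1.
by rewrite exprS -IH.
Qed.

Lemma endo_zero phi : fa_endo phi -> phi (fa_zero k) = fa_zero k.
Proof.
move=> [_ [hl _]].
have e : fa_add (fa_scale 1 (fa_zero k)) (fa_zero k) = fa_zero k.
  by apply: funext => w; rewrite /fa_add /fa_scale /fa_zero mulr0 addr0.
have := hl 1 _ _ inFA_zero inFA_zero; rewrite e => h.
apply: funext => w; have := congr1 (fun f => f w) h.
rewrite /fa_add /fa_scale /fa_zero mul1r /= => e2.
by apply: (@addrI _ (phi (fun _ => 0) w)); rewrite addr0 -e2.
Qed.

Lemma endo_iter phi (f : poly_t k) n : fa_endo phi -> inFA f ->
  phi (iter n (fa_mul f) f) = iter n (fa_mul (phi f)) (phi f).
Proof.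
move=> [h1 [h2 h3]] hf; elim: n => //= n IH.
by rewrite h3 ?IH //; apply: iter_inFA.
Qed.

Lemma endo_comp (phi psi : poly_t k -> poly_t k) : fa_endo phi -> fa_endo psi -> fa_endo (fun f => phi (psi f)).
Proof.
move=> [a1 [a2 a3]] [b1 [b2 b3]]; split; [|split].
- by move=> f hf; apply: a1; apply: b1.
- by move=> a f g hf hg; rewrite b2 // a2 //; apply: b1.
- by move=> f g hf hg; rewrite b3 // a3 //; apply: b1.
Qed.

Lemma lam_lin w0 a (f g : poly_t k) : lam w0 (fa_add (fa_scale a f) g : PS k) = a * lam w0 (f : PS k) + lam w0 (g : PS k).
Proof. by rewrite /lam mulr_sumr -big_split. Qed.

Lemma flat_nseq1 (i : nat) n : flatten (nseq n [:: i]) = nseq n i.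
Proof. by elim: n => //= n ->. Qed.

End Final.

Theorem theorem5p2 (p : nat) (k : fieldType) (hp : prime p)
    (hchar : p \in [pchar k]) :
  ~ (forall f : poly_t k, L1 p f <-> L2 p f).
Proof.
move=> H.
case Ep: p hp hchar H => [//|n] hp' hc H.
set w0 := nseq n.+1 0%N ++ nseq n.+1 1%N.
pose u := fa_pow (fa_var k 0) n.+1.
pose t := fa_mul u (fa_pow (fa_var k 1) n.+1).
have uFA : inFA u by apply: iter_inFA; apply: inFA_var.
have tFA : inFA t by apply: inFA_mul => //; apply: iter_inFA; apply: inFA_var.
have L1u : L1 n.+1 u by split => // S _; apply.
have L2t : L2 n.+1 t.
  split => // S _ hS; apply: hS; right; exists u, (fa_var k 1); split => //; split => //.
  exact: inFA_var.
have L1t := (proj2 (H t)) L2t.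
pose S (f : poly_t k) := inFA f /\ forall phi, fa_endo phi -> lam w0 (phi f : PS k) = 0.
have TS : T_space S.
  split; [by move=> f [] | split; [|split]].
  - split; first exact: inFA_zero.
    by move=> phi hphi; rewrite endo_zero // /lam big1.
  - move=> a f g [hf Sf] [hg Sg]; split; first exact: inFA_lin.
    move=> phi hphi; have [_ [hl _]] := hphi.
    by rewrite hl // lam_lin Sf // Sg // mulr0 addr0.
  - move=> psi hpsi f [hf Sf]; split; first by case: hpsi => h _; apply: h.
    by move=> phi hphi; apply: (Sf (fun f => phi (psi f))); apply: endo_comp.
have St : S t.
  apply: (proj2 L1t) => // g ->; split => // phi hphi.
  rewrite /fa_pow /= endo_iter //; last exact: inFA_var.
  rewrite iter_exp.
  have := @L_pow k n.+1 hp' hc (phi (fa_var k 0)) => /=.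
  apply; case: hphi => h _; apply: h; exact: inFA_var.
have hid : fa_endo (fun f : poly_t k => f) by [].
have := (proj2 St) _ hid.
have -> : (t : PS k) = mono k w0.
  rewrite /t /u /fa_pow /= !iter_exp -mulE.
  rewrite /fa_var.
  have -> : ((fun w => (w == [:: 0%N])%:R) : PS k) = mono k [:: 0%N] by [].
  have -> : ((fun w => (w == [:: 1%N])%:R) : PS k) = mono k [:: 1%N] by [].
  by rewrite !mono_exp mono_mul !flat_nseq1.
rewrite /lam /mono.
have sz : size w0 = (n.+1 + n.+1)%N by rewrite size_cat !size_nseq.
have h0 : (0 < size w0)%N by rewrite sz.
rewrite (bigD1 (Ordinal h0)) //= rot0 eqxx big1 ?addr0; first by move/eqP; rewrite oner_eq0.
move=> j nj; case: eqP => // E; exfalso.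
have jpos : (0 < j)%N.
  rewrite lt0n; apply: contra nj => /eqP e; apply/eqP; apply: val_inj => /=; exact: e.
have jlt : (j < n.+1 + n.+1)%N by rewrite -sz.
have e1 := congr1 (fun s => nth 0%N s 0) E.
have e2 := congr1 (fun s => nth 0%N s (n.+1 + n.+1).-1) E.
move: e1 e2 => /=; rewrite /rot !nth_cat !size_drop sz.
have -> : (0 < n.+1 + n.+1 - j)%N by lia.
have -> : ((n.+1 + n.+1).-1 < n.+1 + n.+1 - j)%N = false by lia.
rewrite nth_drop nth_take; last by lia.
rewrite !(nthw0 hp' hc); try lia.
rewrite addn0 size_nseq nth_nseq.
have -> : (n + n.+1 < n.+1)%N = false by lia.
rewrite nth_nseq.
have -> : (n + n.+1 - n.+1 < n.+1)%N by lia.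
case: ltnP => hj //= _.
have -> : (n + n.+1 - (n.+1 + n.+1 - j) < n.+1)%N by lia.
by [].
Qed.
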